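(* Let $\mathcal H$ be a complex Hilbert space, $T\in\boldsymbol B(\mathcal H)$ a quasinormal operator that is not normal, and $n$ an integer greater than $1$. If there exists a quasinormal $Q\in\boldsymbol B(\mathcal H)$ with $Q^n=T$, then there exists $R\in\boldsymbol B(\mathcal H)$ which is not quasinormal and satisfies $R^n=T$.
   Context: A bounded operator $T$ is normal if $T^*T=TT^*$ and quasinormal if $T(T^*T)=(T^*T)T$. *)

(* Defs.v *)
From HB Require Import structures.
From mathcomp Require Import all_boot all_order all_algebra.
From mathcomp Require Import reals complex.
Set Implicit Arguments. Unset Strict Implicit. Unset Printing Implicit Defensive.
Import Order.TTheory GRing.Theory Num.Theory.
Local Open Scope ring_scope.

Section Hilbert.
Variables (R : realType) (V : lmodType R[i]) (ip : V -> V -> R[i]).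

Definition hnorm (x : V) : R[i] := sqrtC (ip x x).

Definition is_hilbert : Prop :=
  [/\ (forall (a : R[i]) (x y z : V), ip (a *: x + y) z = a * ip x z + ip y z),
      (forall x y : V, ip y x = (ip x y)^*),
      (forall x : V, 0 <= ip x x),
      (forall x : V, ip x x = 0 -> x = 0) &
      (forall u : nat -> V,
          (forall e : R[i], 0 < e -> exists N : nat, forall m n : nat,
               (N <= m)%N -> (N <= n)%N -> hnorm (u m - u n) < e) ->
          exists l : V, forall e : R[i], 0 < e -> exists N : nat,
               forall n : nat, (N <= n)%N -> hnorm (u n - l) < e)].

Definition bounded_op (T : V -> V) : Prop :=
  (forall (a : R[i]) (x y : V), T (a *: x + y) = a *: T x + T y) /\
  exists M : R[i], 0 <= M /\ forall x : V, hnorm (T x) <= M * hnorm x.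

Definition is_adjoint (T S : V -> V) : Prop :=
  forall x y : V, ip (T x) y = ip x (S y).

Definition normal_op (T : V -> V) : Prop :=
  exists S, is_adjoint T S /\ forall x, S (T x) = T (S x).

Definition quasinormal_op (T : V -> V) : Prop :=
  exists S, is_adjoint T S /\ forall x, T (S (T x)) = S (T (T x)).

End Hilbert.

(* Main.v *)
From HB Require Import structures.
From mathcomp Require Import all_boot all_order all_algebra.
Require Import Defs.
From mathcomp Require Import reals complex boolp classical_sets.
From mathcomp Require Import ring lra.
Import Order.TTheory GRing.Theory Num.Theory.
Local Open Scope ring_scope.
Set Implicit Arguments. Unset Strict Implicit. Unset Printing Implicit Defensive.

Section Hilb.
Variables (R : realType) (V : lmodType R[i]) (ip : V -> V -> R[i]).
Hypothesis ipl : forall (a : R[i]) (x y z : V), ip (a *: x + y) z = a * ip x z + ip y z.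
Hypothesis ipC : forall x y : V, ip y x = (ip x y)^*.
Hypothesis ipge0 : forall x : V, 0 <= ip x x.
Hypothesis ipdef : forall x : V, ip x x = 0 -> x = 0.

Lemma ip0l z : ip 0 z = 0.
Proof.
have := ipl 1 0 0 z; rewrite scale1r addr0 mul1r => h.
by apply/esym/(@addrI _ (ip 0 z)); rewrite addr0 {1}h.
Qed.

Lemma ipDl x y z : ip (x + y) z = ip x z + ip y z.
Proof. by have := ipl 1 x y z; rewrite scale1r mul1r. Qed.

Lemma ipZl a x z : ip (a *: x) z = a * ip x z.
Proof. by have := ipl a x 0 z; rewrite addr0 ip0l addr0. Qed.

Lemma ipNl x z : ip (- x) z = - ip x z.
Proof. by rewrite -scaleN1r ipZl mulN1r. Qed.

Lemma ipBl x y z : ip (x - y) z = ip x z - ip y z.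
Proof. by rewrite ipDl ipNl. Qed.

Lemma ipDr x y z : ip z (x + y) = ip z x + ip z y.
Proof. by rewrite ipC ipDl rmorphD /= -!ipC. Qed.

Lemma ipZr a x z : ip z (a *: x) = a^* * ip z x.
Proof. by rewrite ipC ipZl rmorphM /= -ipC. Qed.

Lemma ip0r z : ip z 0 = 0.
Proof. by rewrite ipC ip0l rmorph0. Qed.

Lemma ipNr x z : ip z (- x) = - ip z x.
Proof. by rewrite ipC ipNl rmorphN /= -ipC. Qed.

Lemma ipBr x y z : ip z (x - y) = ip z x - ip z y.
Proof. by rewrite ipDr ipNr. Qed.

Lemma ip_ext u v : (forall w, ip w u = ip w v) -> u = v.
Proof.
move=> h; apply/eqP; rewrite -subr_eq0; apply/eqP/ipdef.
by rewrite ipBr h subrr.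
Qed.

Local Notation toC := (real_complex R).
Definition N x := complex.Re (ip x x).

Lemma ipRe x : ip x x = toC (N x).
Proof.
rewrite /N; have := ipge0 x; case: (ip x x) => a b.
by rewrite lecE /= => /andP[/eqP -> _].
Qed.

Lemma N_ge0 x : 0 <= N x.
Proof. by have := ipge0 x; rewrite ipRe lecR. Qed.

Lemma N_eq0 x : N x = 0 -> x = 0.
Proof. by move=> h; apply: ipdef; rewrite ipRe h. Qed.

Lemma N_add x y : N (x + y) = N x + N y + 2 * complex.Re (ip x y).
Proof.
rewrite {1}/N ipDl !ipDr (ipC x y) -/(N x) -/(N y) ipRe (ipRe y).
by case: (ip x y) => a b /=; ring.
Qed.

Lemma N_scale a x : N (a *: x) = (complex.Re a ^+ 2 + complex.Im a ^+ 2) * N x.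
Proof.
rewrite {1}/N ipZl ipZr ipRe.
by case: a => a1 a2 /=; ring.
Qed.

Lemma N_sub_scale u t z :
  N (u - t *: z) = N u + (complex.Re t ^+ 2 + complex.Im t ^+ 2) * N z
                   - 2 * (complex.Re t * complex.Re (ip u z) + complex.Im t * complex.Im (ip u z)).
Proof.
rewrite N_add -scaleNr N_scale ipZr.
case: t => a b; case: (ip u z) => c d /=; ring.
Qed.

Lemma N_opp x : N (- x) = N x.
Proof. by rewrite -scaleN1r N_scale /=; ring. Qed.

Lemma CS u z : complex.Re (ip u z) ^+ 2 + complex.Im (ip u z) ^+ 2 <= N u * N z.
Proof.
have [z0|nz0] := eqVneq (N z) 0.
  by rewrite z0 mulr0 (N_eq0 z0) ip0r /=; lra.
have nzp : 0 < N z by rewrite lt_def nz0 N_ge0.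
set cr := complex.Re (ip u z); set ci := complex.Im (ip u z).
have := N_ge0 (u - (Complex (cr / N z) (ci / N z)) *: z).
rewrite N_sub_scale /= -/cr -/ci => h.
have e : cr ^+ 2 + ci ^+ 2 = ((cr / N z) ^+ 2 + (ci / N z) ^+ 2) * N z * N z.
  by field; rewrite nz0.
rewrite e.
set q := ((cr / N z) ^+ 2 + (ci / N z) ^+ 2).
have e2 : cr / N z * cr + ci / N z * ci = q * N z.
  by rewrite /q; field.
rewrite e2 in h.
have key : forall A B T : R, 0 <= A + B - 2 * T -> B = T -> T <= A.
  by move=> A B T; lra.
have h2 : q * N z <= N u by apply: (key _ _ _ h).
by rewrite ler_wpM2r // ltW.
Qed.

Lemma toC_Re (e : R[i]) : 0 <= e -> e = toC (complex.Re e).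
Proof. by case: e => a b; rewrite lecE /= => /andP[/eqP -> _]. Qed.

Lemma hnorm_lt x e : 0 < e -> (hnorm ip x < e) = (N x < complex.Re e ^+ 2).
Proof.
move=> e0; have e0' : 0 <= e := ltW e0.
rewrite /hnorm -{1}(sqrCK e0') ltr_sqrtC ?nnegrE ?ipge0 ?exprn_ge0 //.
by rewrite ipRe {1}(toC_Re e0') -rmorphXn ltcR.
Qed.

Lemma hnorm_le x y M : 0 <= M ->
  (hnorm ip y <= M * hnorm ip x) = (N y <= complex.Re M ^+ 2 * N x).
Proof.
move=> M0; rewrite /hnorm -{1}(sqrCK M0) -sqrtCM ?nnegrE ?ipge0 ?exprn_ge0 //.
rewrite ler_sqrtC ?nnegrE ?ipge0 ?mulr_ge0 ?exprn_ge0 //.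
by rewrite !ipRe [in LHS](toC_Re M0) -rmorphXn -rmorphM lecR.
Qed.

Hypothesis ipcomp : forall u : nat -> V,
  (forall e : R[i], 0 < e -> exists N0 : nat, forall m n : nat,
       (N0 <= m)%N -> (N0 <= n)%N -> hnorm ip (u m - u n) < e) ->
  exists l : V, forall e : R[i], 0 < e -> exists N0 : nat,
       forall n : nat, (N0 <= n)%N -> hnorm ip (u n - l) < e.

Lemma compR (u : nat -> V) :
  (forall eps : R, 0 < eps -> exists N0 : nat, forall m n : nat,
       (N0 <= m)%N -> (N0 <= n)%N -> N (u m - u n) < eps) ->
  exists l : V, forall eps : R, 0 < eps -> exists N0 : nat,
       forall n : nat, (N0 <= n)%N -> N (u n - l) < eps.
Proof.
move=> hc.
have hc' : forall e : R[i], 0 < e -> exists N0 : nat, forall m n : nat,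
       (N0 <= m)%N -> (N0 <= n)%N -> hnorm ip (u m - u n) < e.
  move=> e e0; have e0' : 0 <= e := ltW e0.
  have er : 0 < complex.Re e ^+ 2.
    by rewrite exprn_gt0 // -ltcR -toC_Re.
  have [N0 hN] := hc _ er; exists N0 => m k hm hk.
  by rewrite hnorm_lt // hN.
have [l hl] := ipcomp hc'.
exists l => eps eps0.
have e0 : 0 < toC (Num.sqrt eps) by rewrite ltcR sqrtr_gt0.
have [N0 hN] := hl _ e0; exists N0 => n hn.
by have := hN n hn; rewrite hnorm_lt //= sqr_sqrtr // ltW.
Qed.

Lemma inv_small (eps : R) : 0 < eps ->
  exists N0 : nat, forall m : nat, (N0 <= m)%N -> (m.+1%:R)^-1 < eps.
Proof.
move=> e0; exists (Num.Def.archi_bound eps^-1) => m hm.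
have e1 : 0 <= eps^-1 by rewrite invr_ge0 ltW.
have h1 := archi_boundP e1.
have h2 : eps^-1 < m.+1%:R.
  apply: (lt_le_trans h1); rewrite ler_nat; exact: (leq_trans hm).
by rewrite invf_plt ?posrE ?ltr0Sn.
Qed.

Definition inW (Zp : V -> Prop) w := forall z, Zp z -> ip w z = 0.

Lemma inW_lin Zp a u v : inW Zp u -> inW Zp v -> inW Zp (a *: u + v).
Proof. by move=> hu hv z hz; rewrite ipl hu ?hv // mulr0 addr0. Qed.

Lemma inW0 Zp : inW Zp 0.
Proof. by move=> z _; rewrite ip0l. Qed.

Lemma inWB Zp u v : inW Zp u -> inW Zp v -> inW Zp (u - v).
Proof. by move=> hu hv; rewrite -scaleN1r addrC; apply: inW_lin. Qed.

Lemma Re_opp (c : R[i]) : complex.Re (- c) = - complex.Re c.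
Proof. by case: c. Qed.

Lemma N2 y : N ((2 : R[i]) *: y) = 4 * N y.
Proof. by rewrite N_scale /=; ring. Qed.

Lemma parallelogram a b : N (a + b) + N (a - b) = 2 * N a + 2 * N b.
Proof. rewrite !N_add N_opp ipNr Re_opp; ring. Qed.

Lemma inWZ Zp a u : inW Zp u -> inW Zp (a *: u).
Proof. by move=> hu; rewrite -[_ *: u]addr0; apply: inW_lin => //; apply: inW0. Qed.

Lemma inWD Zp u v : inW Zp u -> inW Zp v -> inW Zp (u + v).
Proof. by move=> hu hv; rewrite -[u]scale1r; apply: inW_lin. Qed.

Lemma cplx0 (c : R[i]) : complex.Re c ^+ 2 + complex.Im c ^+ 2 <= 0 -> c = 0.
Proof.
case: c => a b /= h.
have ha : a ^+ 2 + b ^+ 2 = 0 by apply/le_anti; rewrite h addr_ge0 ?sqr_ge0.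
move/eqP: ha; rewrite paddr_eq0 ?sqr_ge0 // !expf_eq0 /=.
by case/andP=> /eqP -> /eqP ->.
Qed.

Lemma real_step (X d g A B C h eps : R) : 0 < g -> 0 <= d ->
  X = A + B + 2 * C -> 0 <= A -> 0 <= B -> C ^+ 2 <= A * B ->
  A < d + h -> B < eps -> h = g / (g + 3) ->
  eps = g ^+ 2 / (36 * (d + 1) + 3 * g) -> X < d + g.
Proof.
move=> g0 d0 -> A0 B0 CAB hA hB eh ee.
have g3 : 0 < g + 3 by lra.
have D0 : 0 < 36 * (d + 1) + 3 * g by lra.
have h1 : h <= 1 by rewrite eh ler_pdivrMr //; lra.
have h2 : h <= g / 3 by rewrite eh ler_pdivrMr // mulrAC ler_pdivlMr //; nra.
have e1 : eps <= g / 3.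
  by rewrite ee ler_pdivrMr // mulrAC ler_pdivlMr //; nra.
have e2 : (d + 1) * eps <= g ^+ 2 / 36.
  rewrite ee mulrA ler_pdivrMr // mulrAC ler_pdivlMr //; nra.
have AB : A * B <= (d + 1) * eps.
  apply: ler_pM; lra.
have C6 : C <= g / 6.
  have : C ^+ 2 <= (g / 6) ^+ 2.
    apply: (le_trans CAB); apply: (le_trans AB); apply: (le_trans e2).
    by rewrite expr_div_n; lra.
  move=> hc; rewrite leNgt; apply/negP => hlt.
  have : (g / 6) ^+ 2 < C ^+ 2.
    by rewrite ltr_pXn2r // ?nnegrE; lra.
  lra.
lra.
Qed.

Lemma proj_exists Zp x : exists p, inW Zp p /\ forall w, inW Zp w -> ip (x - p) w = 0.
Proof.
pose E := ([set r : R | exists w, inW Zp w /\ r = N (x - w)])%classic.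
have E0 : E (N x) by exists 0; split; [exact: inW0 | rewrite subr0].
have hlb : has_lbound E by exists 0 => r [w [_ ->]]; exact: N_ge0.
have hinf : has_inf E by split; [exists (N x) | ].
set d := inf E.
have dle : forall w, inW Zp w -> d <= N (x - w).
  by move=> w hw; apply: (ge_inf hlb); exists w.
have d0 : 0 <= d.
  by apply: lb_le_inf; [exists (N x) | move=> r [w [_ ->]]; exact: N_ge0].
have seqex : forall k : nat, exists w, inW Zp w /\ N (x - w) < d + (k.+1%:R)^-1.
  move=> k; have ep : 0 < (k.+1%:R : R)^-1 by rewrite invr_gt0 ltr0Sn.
  have [r [w [hw ->]] hr] := inf_adherent ep hinf.
  by exists w.
case: (boolp.choice seqex) => w hw.
have wW k : inW Zp (w k) := (hw k).1.
have cb : forall j k, N (w j - w k) <= 2 * (j.+1%:R)^-1 + 2 * (k.+1%:R)^-1.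
  move=> j k.
  have := parallelogram (x - w k) (x - w j).
  have -> : x - w k - (x - w j) = w j - w k.
    by rewrite opprB addrC addrA subrK.
  have -> : x - w k + (x - w j) = (2 : R[i]) *: (x - 2^-1 *: (w j + w k)).
    rewrite scalerBr scalerA mulfV ?pnatr_eq0 // scale1r scaler_nat mulr2n.
    by rewrite opprD addrACA (addrC (- w k)).
  rewrite N2 => h.
  have := dle _ (inWZ 2^-1 (inWD (wW j) (wW k))).
  have := (hw j).2; have := (hw k).2; move=> h1 h2 h3. set a := (j.+1%:R^-1 : R) in h1 h2 h3 h *. set b := (k.+1%:R^-1 : R) in h1 h2 h3 h *. set A := N (x - 2^-1 *: (w j + w k)) in h1 h2 h3 h *. lra.
have cauchy : forall eps : R, 0 < eps -> exists N0 : nat, forall m n : nat,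
    (N0 <= m)%N -> (N0 <= n)%N -> N (w m - w n) < eps.
  move=> eps e0; have e4 : 0 < eps / 4 by rewrite divr_gt0.
  have [N0 hN] := inv_small e4; exists N0 => m k hm hk.
  have := cb m k; have := hN m hm; have := hN k hk; move=> h1 h2 h3. set a := (m.+1%:R^-1 : R) in h1 h2 h3 *. set b := (k.+1%:R^-1 : R) in h1 h2 h3 *. lra.
have [l hl] := compR cauchy.
have lW : inW Zp l.
  move=> z hz; apply: cplx0; rewrite leNgt; apply/negP => qp.
  set q := _ + _ in qp.
  have nz1 : 0 < N z + 1 by have := N_ge0 z; lra.
  have ep : 0 < q / (N z + 1) by rewrite divr_gt0.
  have [N0 hN] := hl _ ep.
  have h := hN N0 (leqnn _).
  have cs := CS (l - w N0) z.
  rewrite ipBl (wW N0 z hz) subr0 -/q in cs.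
  have nn : N (l - w N0) = N (w N0 - l) by rewrite -N_opp opprB.
  rewrite nn in cs.
  have h2 : N (w N0 - l) * N z <= q / (N z + 1) * N z.
    by rewrite ler_wpM2r ?N_ge0 // ltW.
  have h3 : q / (N z + 1) * N z < q.
    by rewrite mulrAC ltr_pdivrMr //; have := N_ge0 z; nra.
  by have := le_lt_trans (le_trans cs h2) h3; rewrite ltxx.
have dl : N (x - l) <= d.
  rewrite leNgt; apply/negP => hlt.
  set g := N (x - l) - d.
  have g0 : 0 < g by rewrite subr_gt0.
  set eps := g ^+ 2 / (36 * (d + 1) + 3 * g).
  have eps0 : 0 < eps.
    by rewrite divr_gt0 ?exprn_gt0 //; lra.
  set h := g / (g + 3).
  have h0 : 0 < h by rewrite divr_gt0 //; lra.
  have [N1 hN1] := hl _ eps0; have [N2 hN2] := inv_small h0.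
  pose n := maxn N1 N2.
  have hA : N (x - w n) < d + h.
    by apply: (lt_trans (hw n).2); rewrite ltrD2l hN2 // leq_maxr.
  have hB := hN1 n (leq_maxl _ _).
  have e : x - l = (x - w n) + (w n - l) by rewrite addrA subrK.
  have cs := CS (x - w n) (w n - l).
  have cs' : complex.Re (ip (x - w n) (w n - l)) ^+ 2 <= N (x - w n) * N (w n - l).
    by apply: le_trans cs; rewrite lerDl sqr_ge0.
  have := real_step g0 d0 (N_add _ _) (N_ge0 _) (N_ge0 _) cs' hA hB erefl erefl.
  by rewrite -e /g subrKC ltxx.
exists l; split => // w0 hw0.
set c := ip (x - l) w0.
set s := (N w0 + 1)^-1.
have s0 : 0 < s by rewrite invr_gt0; have := N_ge0 w0; lra.
have hW : inW Zp (l + (toC s * c) *: w0) by rewrite addrC; apply: inW_lin.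
have := dle _ hW.
rewrite opprD addrA N_sub_scale -/c.
have -> : complex.Re (toC s * c) = s * complex.Re c by case: (c) => a b /=; ring.
have -> : complex.Im (toC s * c) = s * complex.Im c by case: (c) => a b /=; ring.
move=> hd; apply: cplx0.
set q := _ + _.
have q0 : 0 <= q by rewrite addr_ge0 ?sqr_ge0.
have sN : s * N w0 < 1.
  by rewrite mulrC ltr_pdivrMr; have := N_ge0 w0; lra.
have key : 0 <= s ^+ 2 * q * N w0 - 2 * (s * q).
  move: hd dl; rewrite /q; nra.
have key2 : 0 <= s * (s * q * N w0 - 2 * q).
  by move: key; rewrite /q; nra.
rewrite pmulr_rge0 // in key2.
nra.
Qed.


Lemma eight_contra (p a : R) : 0 < p -> p <= a -> 2^-1 * (2^-1 * (2^-1 * p)) = 2^-1 * a -> False.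
Proof. move=> h1 h2 h3; lra. Qed.

Section Ops.
Variables (Q Qs : V -> V) (n : nat).
Hypothesis hQl : forall (a : R[i]) x y, Q (a *: x + y) = a *: Q x + Q y.
Hypothesis hadj : forall x y, ip (Q x) y = ip x (Qs y).
Hypothesis hq : forall x, Q (Qs (Q x)) = Qs (Q (Q x)).
Hypothesis hn : (1 < n)%N.

Lemma adjQs x y : ip (Qs x) y = ip x (Q y).
Proof. by rewrite ipC -hadj -ipC. Qed.

Lemma hQsl (a : R[i]) x y : Qs (a *: x + y) = a *: Qs x + Qs y.
Proof.
by apply: ip_ext => w; rewrite -hadj !ipDr !ipZr !hadj.
Qed.

Lemma lin0 (f : V -> V) : (forall (a : R[i]) x y, f (a *: x + y) = a *: f x + f y) -> f 0 = 0.
Proof.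
move=> hf; have := hf 1 0 0; rewrite !scale1r addr0 => h.
by apply/esym/(@addrI _ (f 0)); rewrite addr0 {1}h.
Qed.

Lemma linD (f : V -> V) : (forall (a : R[i]) x y, f (a *: x + y) = a *: f x + f y) ->
  forall x y, f (x + y) = f x + f y.
Proof. by move=> hf x y; have := hf 1 x y; rewrite !scale1r. Qed.

Lemma linZ (f : V -> V) : (forall (a : R[i]) x y, f (a *: x + y) = a *: f x + f y) ->
  forall a x, f (a *: x) = a *: f x.
Proof. by move=> hf a x; rewrite -[a *: x]addr0 hf (lin0 hf) addr0. Qed.

Lemma linB (f : V -> V) : (forall (a : R[i]) x y, f (a *: x + y) = a *: f x + f y) ->
  forall x y, f (x - y) = f x - f y.
Proof. by move=> hf x y; rewrite (linD hf) -scaleN1r (linZ hf) scaleN1r. Qed.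

Lemma iter_lin (f : V -> V) k : (forall (a : R[i]) x y, f (a *: x + y) = a *: f x + f y) ->
  forall (a : R[i]) x y, iter k f (a *: x + y) = a *: iter k f x + iter k f y.
Proof. by move=> hf; elim: k => [//|k IH] a x y /=; rewrite IH hf. Qed.

Lemma Qs_id x : Qs (Q (Qs x)) = Qs (Qs (Q x)).
Proof.
apply: ip_ext => w.
by rewrite -(hadj w) -(adjQs (Q w)) -(hadj (Qs (Q w))) hq (adjQs (Q (Q w))) (hadj (Q w)) (hadj w).
Qed.

Lemma iter_adj k x y : ip (iter k Q x) y = ip x (iter k Qs y).
Proof.
elim: k x y => [//|k IH] x y /=.
by rewrite hadj IH -iterSr.
Qed.

Lemma iter_adjs k x y : ip (iter k Qs x) y = ip x (iter k Q y).
Proof. by rewrite ipC -iter_adj -ipC. Qed.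

Lemma Q0 : Q 0 = 0. Proof. exact: lin0 hQl. Qed.
Lemma Qs0 : Qs 0 = 0. Proof. exact: lin0 hQsl. Qed.

Definition K u := Qs u = 0.

Lemma KP u : K u -> K (Qs (Q u)).
Proof. by rewrite /K -Qs_id => ->; rewrite Q0 Qs0. Qed.

Lemma shift u j : K u -> Qs (iter j.+1 Q u) = iter j Q (Qs (Q u)).
Proof. by move=> hu; elim: j => [//|j IH] /=; rewrite -hq IH. Qed.

Lemma down k : forall j u, K u -> iter k Qs (iter j Q u) = 0 \/
  (k <= j)%N /\ exists u', K u' /\ iter k Qs (iter j Q u) = iter (j - k)%N Q u'.
Proof.
elim: k => [|k IH] j u hu.
  by right; split => //; exists u; rewrite subn0.
case: (IH j u hu) => [h|[hk [u' [hu' h]]]] /=.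
  by left; rewrite h Qs0.
rewrite h; case Em: (j - k)%N => [|m].
  by left.
right; split; first by rewrite -subn_gt0 Em.
exists (Qs (Q u')); split; first exact: KP.
by rewrite shift // subnS Em.
Qed.

Definition Zp z := exists j u, K u /\ (j %% n != 0)%N /\ z = iter j Q u.

Lemma iter0 (f : V -> V) k : (forall (a : R[i]) x y, f (a *: x + y) = a *: f x + f y) ->
  iter k f 0 = 0.
Proof. by move=> hf; apply: lin0; apply: iter_lin. Qed.

Lemma KW u : K u -> inW Zp u.
Proof.
move=> hu z [j [u' [hu' [hj ->]]]].
rewrite -iter_adjs; case: j hj => [|j] hj; first by rewrite mod0n in hj.
by rewrite iterSr hu (iter0 _ hQsl) ip0l.
Qed.

Lemma QZp u : K u -> Zp (Q u).
Proof. by move=> hu; exists 1%N, u; split => //; rewrite modn_small. Qed.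

Lemma TW w : inW Zp w -> inW Zp (iter n Q w).
Proof.
move=> hw z [j [u [hu [hj ->]]]]; rewrite iter_adj.
case: (down n j hu) => [->|[hk [u' [hu' ->]]]]; first by rewrite ip0r.
apply: hw; exists (j - n)%N, u'; split => //; split => //.
by rewrite -modnDr subnK.
Qed.

Lemma TsW w : inW Zp w -> inW Zp (iter n Qs w).
Proof.
move=> hw z [j [u [hu [hj ->]]]]; rewrite iter_adjs -iterD.
by apply: hw; exists (n + j)%N, u; rewrite modnDl.
Qed.

Section PiSec.
Variable Pi : V -> V.
Hypothesis hPiW : forall x, inW Zp (Pi x).
Hypothesis hPio : forall x w, inW Zp w -> ip (x - Pi x) w = 0.

Definition perp b := forall w, inW Zp w -> ip b w = 0.

Lemma perp_lin a u v : perp u -> perp v -> perp (a *: u + v).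
Proof. by move=> hu hv w hw; rewrite ipl hu ?hv // mulr0 addr0. Qed.

Lemma Pi_uniq a b : inW Zp a -> perp b -> Pi (a + b) = a.
Proof.
move=> ha hb; apply/eqP; rewrite -subr_eq0; apply/eqP/ipdef.
have dW : inW Zp (Pi (a + b) - a) := inWB (hPiW _) ha.
have e : Pi (a + b) - a = b - (a + b - Pi (a + b)).
  by rewrite opprB (addrCA b) opprD (addrCA b) subrr addr0.
by rewrite {1}e ipBl (hb _ dW) (hPio _ dW) subrr.
Qed.

Lemma perp0 : perp 0. Proof. by move=> w _; rewrite ip0l. Qed.

Lemma Pi_W w : inW Zp w -> Pi w = w.
Proof. by move=> hw; have := Pi_uniq hw perp0; rewrite addr0. Qed.

Lemma Pi_perp b : perp b -> Pi b = 0.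
Proof. by move=> hb; have := Pi_uniq (@inW0 Zp) hb; rewrite add0r. Qed.

Lemma perpPi x : perp (x - Pi x).
Proof. by move=> w hw; apply: hPio. Qed.

Lemma Pi_lin (a : R[i]) x y : Pi (a *: x + y) = a *: Pi x + Pi y.
Proof.
have e : a *: x + y = (a *: Pi x + Pi y) + (a *: (x - Pi x) + (y - Pi y)).
  rewrite scalerBr addrACA (addrC (a *: Pi x)) subrK (addrC (Pi y)) subrK //.
rewrite e Pi_uniq //; first by apply: inW_lin.
by apply: perp_lin; apply: perpPi.
Qed.

Lemma PiD x y : Pi (x + y) = Pi x + Pi y. Proof. exact: (linD Pi_lin x y). Qed.
Lemma PiZ a x : Pi (a *: x) = a *: Pi x. Proof. exact: (linZ Pi_lin a x). Qed.
Lemma PiB x y : Pi (x - y) = Pi x - Pi y. Proof. exact: (linB Pi_lin x y). Qed.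
Lemma Pi_idem x : Pi (Pi x) = Pi x. Proof. exact: Pi_W. Qed.

Local Notation T := (iter n Q).

Lemma TD x y : T (x + y) = T x + T y. Proof. exact: (linD (iter_lin _ hQl) x y). Qed.
Lemma TZ a x : T (a *: x) = a *: T x. Proof. exact: (linZ (iter_lin _ hQl) a x). Qed.

Lemma Pi_T x : Pi (T x) = T (Pi x).
Proof.
have e : T x = T (Pi x) + T (x - Pi x) by rewrite -TD addrC subrK.
rewrite e Pi_uniq //; first by apply: TW.
by move=> w hw; rewrite iter_adj; apply: perpPi; apply: TsW.
Qed.

Lemma N_orth a b : ip a b = 0 -> N (a + b) = N a + N b.
Proof. by move=> h; rewrite N_add h (_ : complex.Re 0 = 0) // mulr0 addr0. Qed.

Lemma ip_Pi_perp c x : ip (c *: Pi x) (x - Pi x) = 0.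
Proof. by rewrite ipZl ipC perpPi ?rmorph0 ?mulr0 //; apply: hPiW. Qed.

Lemma N_Pi x : N x = N (Pi x) + N (x - Pi x).
Proof.
have e : x = Pi x + (x - Pi x) by rewrite addrC subrK.
rewrite {1}e N_orth //.
by have := ip_Pi_perp 1 x; rewrite scale1r.
Qed.

Definition D x := x + Pi x.
Definition Di x := x - 2^-1 *: Pi x.
Definition Rop x := D (Q (Di x)).

Lemma half (v : V) : 2^-1 *: v + 2^-1 *: v = v.
Proof. by rewrite -scalerDl (_ : 2^-1 + 2^-1 = 1 :> R[i]) ?scale1r //; field. Qed.

Lemma DiD x : Di (D x) = x.
Proof. by rewrite /Di /D PiD Pi_idem scalerDr half addrK. Qed.

Lemma DDi x : D (Di x) = x.
Proof.
rewrite /Di /D PiB PiZ Pi_idem.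
set h := 2^-1 *: Pi x.
by rewrite -(half (Pi x)) -/h addrK subrK.
Qed.

Lemma D_lin (a : R[i]) x y : D (a *: x + y) = a *: D x + D y.
Proof. by rewrite /D Pi_lin scalerDr addrACA. Qed.

Lemma Di_lin (a : R[i]) x y : Di (a *: x + y) = a *: Di x + Di y.
Proof.
rewrite /Di Pi_lin scalerDr scalerBr scalerA mulrC -scalerA opprD addrACA //.
Qed.

Lemma Rop_lin (a : R[i]) x y : Rop (a *: x + y) = a *: Rop x + Rop y.
Proof. by rewrite /Rop Di_lin hQl D_lin. Qed.

Lemma iter_Rop k x : iter k Rop x = D (iter k Q (Di x)).
Proof.
elim: k => [|k IH] /=; first by rewrite DDi.
by rewrite IH /Rop DiD.
Qed.

Lemma Rop_pow x : iter n Rop x = T x.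
Proof.
rewrite iter_Rop /Di.
have -> : T (x - 2^-1 *: Pi x) = T x - 2^-1 *: Pi (T x).
  by rewrite (linB (iter_lin _ hQl)) TZ Pi_T.
by rewrite -/(Di (T x)) DDi.
Qed.

Lemma N_D y : N y <= N (D y) /\ N (D y) <= 4 * N y.
Proof.
have e : D y = (1 + 1 : R[i]) *: Pi y + (y - Pi y).
  by rewrite /D scalerDl scale1r addrACA subrr addr0 addrC.
rewrite e N_orth ?ip_Pi_perp // N_scale /= (N_Pi y).
have := N_ge0 (Pi y); have := N_ge0 (y - Pi y).
move: (N (Pi y)) (N (y - Pi y)) => a b ha hb.
split; lra.
Qed.

Lemma N_Di y : N (Di y) <= N y.
Proof.
have e : Di y = 2^-1 *: Pi y + (y - Pi y).
  by rewrite /Di -{3}(half (Pi y)) opprD (addrCA (2^-1 *: Pi y)) addNKr.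
rewrite e N_orth ?ip_Pi_perp // N_scale /= (N_Pi y).
have := N_ge0 (Pi y); have := N_ge0 (y - Pi y).
move: (N (Pi y)) (N (y - Pi y)) => a b ha hb.
have hc : forall c : R, c = 4^-1 -> c * a + b <= a + b by move=> c ->; lra.
by apply: hc; field.
Qed.
Lemma Rop_bounded (M : R[i]) : 0 <= M -> (forall x, hnorm ip (Q x) <= M * hnorm ip x) ->
  forall x, hnorm ip (Rop x) <= (2 * M) * hnorm ip x.
Proof.
move=> M0 hM x.
have M20 : 0 <= 2 * M by rewrite mulr_ge0 // ler0n.
rewrite hnorm_le //.
have h1 := (N_D (Q (Di x))).2.
have h2 : N (Q (Di x)) <= complex.Re M ^+ 2 * N (Di x) by rewrite -hnorm_le.
have h3 := N_Di x.
have -> : complex.Re (2 * M) = 2 * complex.Re M by case: (M) => a b /=; ring.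
rewrite /Rop.
have hm : 0 <= complex.Re M ^+ 2 := sqr_ge0 _.
have h4 : complex.Re M ^+ 2 * N (Di x) <= complex.Re M ^+ 2 * N x by rewrite ler_wpM2l.
move: h1 h2 h4; move: (N (D (Q (Di x)))) (N (Q (Di x))) (complex.Re M ^+ 2 * N (Di x)) => a b c.
rewrite exprMn -mulrA (_ : (2 : R) ^+ 2 = 4); last by ring.
move: (complex.Re M ^+ 2 * N x) => d; lra.
Qed.

Lemma not_qn x0 : Qs (Q x0) != Q (Qs x0) -> ~ quasinormal_op ip Rop.
Proof.
move=> hx0 [S' [hS' hqR]].
set m := Qs (Q x0) - Q (Qs x0).
have m0 : m != 0 by rewrite subr_eq0.
have Km : K m by rewrite /K (linB hQsl) Qs_id subrr.
have Qm0 : Q m != 0.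
  apply/eqP => hQm; move/eqP: m0; apply; apply: ipdef.
  by rewrite {1}/m ipBl adjQs (hadj (Qs x0)) hQm (Km : Qs m = 0) !ip0r subrr.
set Pm := Qs (Q m).
have Pm0 : Pm != 0.
  apply/eqP => hP; move/eqP: Qm0; apply; apply: ipdef.
  by rewrite -adjQs -/Pm hP ip0l.
have KPm : K Pm := KP Km.
have PmW : inW Zp Pm := KW KPm.
have mW : inW Zp m := KW Km.
have QmZ : Zp (Q m) := QZp Km.
have perpQm : perp (Q m).
  by move=> w hw; rewrite ipC hw ?rmorph0.
have PiQm : Pi (Q m) = 0 := Pi_perp perpQm.
have Pim : Pi m = m := Pi_W mW.
have c2 : (2^-1 : R[i])^* = 2^-1.
  by apply/eqP; rewrite eq_complex /= eqxx /= !add0r mul0r !oppr0.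
have PiPw : forall w, ip (Pi w) Pm = ip w Pm.
  move=> w; have := hPio w PmW; rewrite ipBl => /eqP; rewrite subr_eq0 => /eqP.
  by move=> ->.
have SQm : S' (Q m) = 2^-1 *: Pm.
  apply: ip_ext => w; rewrite -hS' /Rop /D ipDl (hPiW _ QmZ) addr0 hadj -/Pm.
  rewrite /Di ipBl ipZl PiPw ipZr c2.
  by field.
have Rm : Rop m = 2^-1 *: Q m.
  rewrite /Rop /Di Pim -{1}(half m) addrK (linZ hQl) /D PiZ PiQm.
  by rewrite scaler0 addr0.
have SRm : S' (Rop m) = 2^-1 *: S' (Q m).
  by apply: ip_ext => w; rewrite -hS' Rm ipZr hS' ipZr.
have RQm : Rop (Q m) = D (Q (Q m)) by rewrite /Rop /Di PiQm scaler0 subr0.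
have RRm : Rop (Rop m) = 2^-1 *: D (Q (Q m)) by rewrite Rm (linZ Rop_lin) RQm.
have NV : N (Q (Q m)) = N Pm.
  by rewrite /N; congr complex.Re; rewrite hadj -hq -adjQs.
have := congr1 (fun v => ip v (Q m)) (hqR m).
rewrite /= hS' SRm SQm [RHS]ipC -hS' RQm RRm.
rewrite !ipZl !ipZr c2 rmorphM /= c2 -ipC !ipRe.
have t2 : (2^-1 : R[i]) = toC 2^-1.
  by apply/eqP; rewrite eq_complex /=; apply/andP; split; apply/eqP; field.
rewrite t2 -!rmorphM => /complexI.
have hP : 0 < N Pm.
  rewrite lt_def N_ge0 andbT; apply/eqP => h; move/eqP: Pm0; apply; exact: N_eq0.
have := (N_D (Q (Q m))).1; rewrite NV.
move: (N (D (Q (Q m)))) hP => a hP h1 h2.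
exact: (eight_contra hP h1 h2).
Qed.


End PiSec.

Lemma construct (M : R[i]) : 0 <= M -> (forall x, hnorm ip (Q x) <= M * hnorm ip x) ->
  forall x0, Qs (Q x0) != Q (Qs x0) ->
  exists Rop : V -> V, bounded_op ip Rop /\ ~ quasinormal_op ip Rop /\
    forall x, iter n Rop x = iter n Q x.
Proof.
move=> M0 hM x0 hx0.
case: (boolp.choice (fun x => proj_exists Zp x)) => Pi hPi.
have hPiW x : inW Zp (Pi x) := (hPi x).1.
have hPio x w : inW Zp w -> ip (x - Pi x) w = 0 := (hPi x).2 w.
exists (Rop Pi); split; [split|split].
- exact: (Rop_lin hPiW hPio).
- exists (2 * M); split; first by rewrite mulr_ge0 // ler0n.
  exact: (Rop_bounded hPiW hPio M0 hM).
- exact: (not_qn hPiW hPio hx0).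
- exact: (Rop_pow hPiW hPio).
Qed.

End Ops.
End Hilb.

Lemma iter_comm (T : Type) (f g : T -> T) : (forall x, f (g x) = g (f x)) ->
  forall a b x, iter a f (iter b g x) = iter b g (iter a f x).
Proof.
move=> h; have h1 : forall b x, f (iter b g x) = iter b g (f x).
  by elim=> [//|b IH] x /=; rewrite h IH.
by elim=> [//|a IH] b x /=; rewrite IH h1.
Qed.

Unset Implicit Arguments.

Theorem theorem6p3 (R : realType) (V : lmodType R[i]) (ip : V -> V -> R[i])
  (T : V -> V) (n : nat) :
  is_hilbert ip ->
  bounded_op ip T -> quasinormal_op ip T -> ~ normal_op ip T ->
  (1 < n)%N ->
  (exists Q : V -> V, bounded_op ip Q /\ quasinormal_op ip Q /\
      forall x, iter n Q x = T x) ->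
  exists Rop : V -> V, bounded_op ip Rop /\ ~ quasinormal_op ip Rop /\
      forall x, iter n Rop x = T x.
Proof.
move=> [ipl ipC ipge0 ipdef ipcomp] _ _ hTn hn [Q [[hQl [M [M0 hM]]] [[Qs [hadj hq]] hQT]]].
have [x0 hx0] : exists x0, Qs (Q x0) != Q (Qs x0).
  case: (boolp.pselect (exists x0, Qs (Q x0) != Q (Qs x0))) => [//|hno].
  exfalso; apply: hTn; exists (iter n Qs); split.
    move=> x y; rewrite -hQT.
    by apply: iter_adj.
  have hc : forall x, Qs (Q x) = Q (Qs x).
    move=> x; apply/eqP; apply/negPn/negP => hne; apply: hno; by exists x.
  move=> x; rewrite -!hQT; apply: iter_comm => y; exact: hc.
have [Rop [h1 [h2 h3]]] : exists Rop : V -> V, bounded_op ip Rop /\ ~ quasinormal_op ip Rop /\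
    forall x, iter n Rop x = iter n Q x.
  by apply: (construct ipl ipC ipge0 ipdef ipcomp hQl hadj hq hn M0 hM hx0).
by exists Rop; split => //; split => // x; rewrite h3 hQT.
Qed.
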